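(* Let $\mathcal{S}$ be a finite elation generalized quadrangle of order $(s,t)$ with elation group $G$ and associated $4$-gonal family $(G,\{A_i\}_{i=0}^t,\{A_i^*\}_{i=0}^t)$, and let $\Delta:=\sum_{i=0}^t (A_i\setminus\{1\})$, $\Delta^*:=\sum_{i=0}^t (A_i^*\setminus\{1\})$ in $\mathbb{R}[G]$. Let $\chi$ be a nonprincipal linear character of $G$, extended linearly to a ring homomorphism $\mathbb{R}[G]\to\mathbb{C}$, and let $u$ and $u'$ be the numbers of indices $i$ with $A_i\le\ker(\chi)$ and with $A_i^*\le \ker(\chi)$ respectively. Then \[\chi(\Delta)=su-t-1,\qquad \chi(\Delta^* )=stu'-t-1,\] and $(u,u')$ is one of $(1,1)$, $(0,0)$, $(\tfrac{t}{s}+1,0)$.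
   Context: A generalized quadrangle of order $(s,t)$: each line has $s+1$ points, each point is on $t+1$ lines, and for each non-incident point-line pair $(P,\ell)$ there is a unique point on $\ell$ collinear with $P$. An elation about $P$ is an automorphism that is the identity or fixes each line through $P$ and no point not collinear with $P$. $\mathcal{S}$ is an elation generalized quadrangle with base point $P$ and elation group $G$ if $G$ consists of elations about $P$ and acts regularly on the points not collinear with $P$. The associated $4$-gonal family: fix a point $y$ not collinear with $P$, let $M_0,\dots,M_t$ be the lines through $y$, let $z_i$ be the unique point of $M_i$ collinear with $P$, and let $A_i$, $A_i^*$ be the stabilizers in $G$ of $M_i$ and $z_i$ respectively. In $\mathbb{R}[G]$ a subset is identified with the sum of its elements. $\ker(\chi)=\{g:\chi(g)=\chi(1)\}$. *)

(* Defs.v *)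
From mathcomp Require Import all_boot all_order all_algebra all_fingroup all_solvable all_field all_character.
Set Implicit Arguments. Unset Strict Implicit. Unset Printing Implicit Defensive.
Import GRing.Theory Num.Theory.
Local Open Scope ring_scope.

Section GQ.
Variables (Pt Ln : finType) (inc : Pt -> Ln -> bool).

Definition collinear (x y : Pt) : bool := [exists l, inc x l && inc y l].

Definition is_GQ (s t : nat) : Prop :=
  [/\ (1 <= s)%N /\ (1 <= t)%N,
      (forall l, #|[set x | inc x l]| = s.+1),
      (forall x, #|[set l | inc x l]| = t.+1),
      (forall x y l m, x != y -> inc x l -> inc y l -> inc x m -> inc y m -> l = m)
    & (forall x l, ~~ inc x l -> exists! y, inc y l && collinear x y)].

Definition fixes_line (g : {perm Pt}) (l : Ln) : bool :=
  [forall x, inc x l == inc (g x) l].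

(* g is an automorphism (collineation): it maps lines onto lines.
   (In a GQ with s >= 1 a line is determined by its point set, so the
   action on points determines the automorphism.) *)
Definition collineation (g : {perm Pt}) : Prop :=
  forall l, exists l', forall x, inc x l = inc (g x) l'.

Definition elation (p0 : Pt) (g : {perm Pt}) : Prop :=
  g = 1%g \/
  ((forall l, inc p0 l -> fixes_line g l) /\
   (forall x, ~~ collinear p0 x -> g x != x)).

Definition is_EGQ (s t : nat) (p0 : Pt) (G : {group {perm Pt}}) : Prop :=
  [/\ is_GQ s t,
      (forall g, g \in G -> collineation g /\ elation p0 g)
    & (forall x y, ~~ collinear p0 x -> ~~ collinear p0 y ->
         exists! g, g \in G /\ g x = y)].

(* 4-gonal family attached to a point y not collinear with p0:
   for a line M through y, A_M = stabilizer of M in G,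
   A*_M = stabilizer in G of z_M, the point of M collinear with p0. *)
Definition lineStab (G : {group {perm Pt}}) (M : Ln) : {set {perm Pt}} :=
  [set g in G | fixes_line g M].

Definition zpt (p0 y : Pt) (M : Ln) : Pt :=
  odflt y [pick z | inc z M && collinear p0 z].

Definition pointStab (G : {group {perm Pt}}) (z : Pt) : {set {perm Pt}} :=
  [set g in G | g z == z].

Definition Delta (G : {group {perm Pt}}) (y : Pt) (chi : 'CF(G)) : algC :=
  \sum_(M | inc y M) \sum_(g in lineStab G M :\ 1%g) chi g.

Definition DeltaStar (G : {group {perm Pt}}) (p0 y : Pt) (chi : 'CF(G)) : algC :=
  \sum_(M | inc y M) \sum_(g in pointStab G (zpt p0 y M) :\ 1%g) chi g.

Definition u_count (G : {group {perm Pt}}) (y : Pt) (chi : 'CF(G)) : nat :=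
  #|[set M | inc y M & lineStab G M \subset cfker chi]|.

Definition u'_count (G : {group {perm Pt}}) (p0 y : Pt) (chi : 'CF(G)) : nat :=
  #|[set M | inc y M & pointStab G (zpt p0 y M) \subset cfker chi]|.

End GQ.

(* Main.v *)
Require Import Defs.
From mathcomp Require Import all_boot all_order all_algebra all_fingroup all_solvable all_field all_character.
From mathcomp Require Import ring.
Import GRing.Theory Num.Theory.
Set Implicit Arguments. Unset Strict Implicit.

Section Geo.
Variables (Pt Ln : finType) (inc : Pt -> Ln -> bool) (s t : nat) (P : Pt)
  (G : {group {perm Pt}}) (y : Pt).
Hypothesis HE : is_EGQ inc s t P G.
Hypothesis Hy : ~~ collinear inc P y.

Local Notation coll := (collinear inc).

Lemma GQ_of : is_GQ inc s t. Proof. by case: HE. Qed.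
Lemma s_pos : (0 < s)%N. Proof. by case: GQ_of => [[]]. Qed.
Lemma t_pos : (0 < t)%N. Proof. by case: GQ_of => [[]]. Qed.
Lemma line_card l : #|[set x | inc x l]| = s.+1. Proof. by case: GQ_of. Qed.
Lemma pt_card x : #|[set l | inc x l]| = t.+1. Proof. by case: GQ_of. Qed.
Lemma uniq_line x x' l m : x != x' -> inc x l -> inc x' l -> inc x m -> inc x' m -> l = m.
Proof. by case: GQ_of => _ _ _ H _; apply: H. Qed.
Lemma gq_ax x l : ~~ inc x l -> exists! w, inc w l && coll x w.
Proof. by case: GQ_of => _ _ _ _ H; apply: H. Qed.

Lemma collP a b : reflect (exists l, inc a l && inc b l) (coll a b).
Proof. exact: existsP. Qed.

Lemma coll_sym a b : coll a b = coll b a.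
Proof. by apply/collP/collP => -[l /andP[h1 h2]]; exists l; rewrite h1 h2. Qed.

Lemma coll_line a b l : inc a l -> inc b l -> coll a b.
Proof. by move=> h1 h2; apply/collP; exists l; rewrite h1 h2. Qed.

Lemma ex_line x : exists l, inc x l.
Proof.
have : (0 < #|[set l | inc x l]|)%N by rewrite pt_card.
by case/card_gt0P => l; rewrite inE => h; exists l.
Qed.

Lemma coll_refl a : coll a a.
Proof. by case: (ex_line a) => l hl; exact: (coll_line hl hl). Qed.

Lemma no_two x l a b : ~~ inc x l -> inc a l -> inc b l -> coll x a -> coll x b -> a = b.
Proof.
move=> /gq_ax [w [_ Hu]] al bl xa xb.
by rewrite -(Hu a) ?al ?xa // -(Hu b) ?bl ?xb.
Qed.

Lemma Gcoll g : g \in G -> collineation inc g.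
Proof. by case: HE => _ H _ /H []. Qed.
Lemma Gel g : g \in G -> elation inc P g.
Proof. by case: HE => _ H _ /H []. Qed.

Lemma Gfix_line g L x : g \in G -> inc P L -> inc (g x) L = inc x L.
Proof.
move=> /Gel [->|[H _]] PL; first by rewrite perm1.
by move: (H L PL) => /forallP /(_ x) /eqP ->.
Qed.

Lemma two_lines_P : exists L1 L2, [/\ L1 != L2, inc P L1 & inc P L2].
Proof.
case: (ex_line P) => L1 h1.
have : (0 < #|[set l | inc P l] :\ L1|)%N.
  by have := cardsD1 L1 [set l | inc P l]; rewrite pt_card inE h1 add1n => -[<-]; apply: t_pos.
case/card_gt0P => L2; rewrite !inE => /andP[ne h2].
by exists L1, L2; rewrite eq_sym.
Qed.

Lemma gP g : g \in G -> g P = P.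
Proof.
move=> gG; case: two_lines_P => L1 [L2 [ne h1 h2]].
apply/eqP; apply: contraR ne => ne.
by apply/eqP; apply: (uniq_line ne); rewrite ?Gfix_line.
Qed.

Lemma gcoll_imp g a b : g \in G -> coll a b -> coll (g a) (g b).
Proof.
move=> /Gcoll H /collP [l /andP [al bl]].
case: (H l) => l' Hl'; apply/collP; exists l'.
by rewrite -!Hl' al bl.
Qed.

Lemma gcoll g a b : g \in G -> coll (g a) (g b) = coll a b.
Proof.
move=> gG; apply/idP/idP; last exact: gcoll_imp.
move/(gcoll_imp (groupVr gG)); by rewrite !permK.
Qed.

Lemma gcollP g a : g \in G -> coll P (g a) = coll P a.
Proof. by move=> gG; rewrite -{1}(gP gG) gcoll. Qed.

Lemma reg_uniq g h x : g \in G -> h \in G -> ~~ coll P x -> g x = h x -> g = h.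
Proof.
move=> gG hG Px e.
case: HE => _ _ /(_ x (g x) Px) H.
have Pgx : ~~ coll P (g x) by rewrite gcollP.
case: (H Pgx) => k [_ Hu].
by rewrite -(Hu g) // -(Hu h).
Qed.

Lemma reg_ex w : ~~ coll P w -> exists2 g, g \in G & g y = w.
Proof.
move=> Pw; case: HE => _ _ /(_ y w Hy Pw) [g [[gG e] _]].
by exists g.
Qed.


Section Line.
Variable M : Ln.
Hypothesis yM : inc y M.
Local Notation z := (zpt inc P y M).

Lemma PnM : ~~ inc P M.
Proof. by apply: contra Hy => PM; apply: coll_line PM yM. Qed.

Lemma z_spec : inc z M && coll P z.
Proof.
rewrite /zpt; case: pickP => [w //|H].
by case: (gq_ax PnM) => w [hw _]; rewrite H in hw.
Qed.
Lemma zM : inc z M. Proof. by case/andP: z_spec. Qed.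
Lemma zP : coll P z. Proof. by case/andP: z_spec. Qed.

Lemma z_uniq w : inc w M -> coll P w -> w = z.
Proof. by move=> wM Pw; apply: (no_two PnM wM zM Pw zP). Qed.

Lemma PNz : P != z.
Proof. by apply: contraNneq PnM => ->; apply: zM. Qed.

Lemma notP_Nz w : ~~ coll P w -> w != z.
Proof. by move=> Pw; apply: contraNneq Pw => ->; apply: zP. Qed.

Local Notation L := (odflt M [pick L | inc P L && inc z L]).

Lemma L_spec : inc P L && inc z L.
Proof.
case: pickP => [K //|H] /=.
by case/collP: zP => K hK; rewrite H in hK.
Qed.
Lemma PL : inc P L. Proof. by case/andP: L_spec. Qed.
Lemma zL : inc z L. Proof. by case/andP: L_spec. Qed.

Lemma notP_NL w : ~~ coll P w -> ~~ inc w L.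
Proof. by move=> Pw; apply: contra Pw => wL; apply: coll_line PL wL. Qed.

Lemma Kfix g : g \in G -> coll (g y) z -> g z = z.
Proof.
move=> gG h.
have gyNL : ~~ inc (g y) L by apply: notP_NL; rewrite gcollP.
apply: (no_two gyNL); first by rewrite Gfix_line ?zL ?PL.
- exact: zL.
- by rewrite gcoll // (coll_line yM zM).
- exact: h.
Qed.

Lemma A_fix g x : g \in lineStab inc G M -> inc (g x) M = inc x M.
Proof. by rewrite inE => /andP[_ /forallP /(_ x) /eqP ->]. Qed.

Lemma A_char g : (g \in lineStab inc G M) = (g \in G) && inc (g y) M.
Proof.
apply/idP/andP => [gA|[gG gyM]].
  by rewrite A_fix // yM; move: gA; rewrite inE => /andP[->].
have gz := Kfix gG (coll_line gyM zM).
case: (Gcoll gG M) => l' Hl'.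
have gyz : g y != z by apply: notP_Nz; rewrite gcollP.
have e : M = l'.
  apply: (uniq_line gyz gyM zM); first by rewrite -Hl'.
  by rewrite -gz -Hl' zM.
rewrite inE gG /=; apply/forallP => x.
by rewrite Hl' -e.
Qed.

Lemma B_char g : (g \in pointStab G z) = (g \in G) && coll (g y) z.
Proof.
rewrite inE; apply/andP/andP => [[gG /eqP gz]|[gG h]]; split => //.
  by rewrite -gz gcoll // (coll_line yM zM).
by rewrite (Kfix gG h).
Qed.

Lemma AsubB g : g \in lineStab inc G M -> g \in pointStab G z.
Proof. by rewrite A_char B_char => /andP[gG gyM]; rewrite gG (coll_line gyM zM). Qed.

Lemma A_group : group_set (lineStab inc G M).
Proof.
apply/group_setP; split; first by rewrite A_char group1 perm1 yM.
move=> a b aA bA; rewrite A_char groupM //=; last by move: bA; rewrite A_char => /andP[].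
  by rewrite permM A_fix // A_fix.
by move: aA; rewrite A_char => /andP[].
Qed.

Lemma B_group : group_set (pointStab G z).
Proof.
apply/group_setP; split; first by rewrite inE group1 perm1 eqxx.
move=> a b; rewrite !inE => /andP[aG /eqP az] /andP[bG /eqP bz].
by rewrite groupM // permM az bz eqxx.
Qed.

Lemma card_A : #|lineStab inc G M| = s.
Proof.
rewrite -(@card_in_imset _ _ (fun g : {perm Pt} => g y)); last first.
  move=> a b; rewrite !A_char => /andP[aG _] /andP[bG _] e.
  exact: (reg_uniq aG bG Hy e).
have -> : [set (g : {perm Pt}) y | g in lineStab inc G M] = [set w | inc w M] :\ z.
  apply/setP => w; rewrite !inE; apply/imsetP/andP => [[g gA ->]|[wz wM]].
    move: gA; rewrite A_char => /andP[gG gyM]; split => //.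
    by apply: notP_Nz; rewrite gcollP.
  have Pw : ~~ coll P w.
    by apply: contra wz => Pw; apply/eqP; apply: z_uniq.
  case: (reg_ex Pw) => g gG gy; exists g => //.
  by rewrite A_char gG gy.
by move: (cardsD1 z [set w | inc w M]); rewrite line_card inE zM add1n => -[->].
Qed.


Lemma B_def g : (g \in pointStab G z) = (g \in G) && (g z == z).
Proof. by rewrite inE. Qed.

Lemma card_lineD l w : inc w l -> #|[set x | inc x l] :\ w| = s.
Proof.
by move=> wl; move: (cardsD1 w [set x | inc x l]); rewrite line_card inE wl add1n => -[->].
Qed.

Lemma card_ptD x l : inc x l -> #|[set m | inc x m] :\ l| = t.
Proof.
by move=> xl; move: (cardsD1 l [set m | inc x m]); rewrite pt_card inE xl add1n => -[->].
Qed.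

Lemma card_B : #|pointStab G z| = (s * t)%N.
Proof.
rewrite -(@card_in_imset _ _ (fun g : {perm Pt} => g y)); last first.
  move=> a b; rewrite !B_char => /andP[aG _] /andP[bG _] e.
  exact: (reg_uniq aG bG Hy e).
pose S2 := [set p : Ln * Pt | [&& inc z p.1, p.1 != L, inc p.2 p.1 & p.2 != z]].
have -> : [set (g : {perm Pt}) y | g in pointStab G z] = [set p.2 | p in S2].
  apply/setP => w; apply/imsetP/imsetP => [[g gB ->]|[[K w'] pS ->]] /=.
    move: gB; rewrite B_char => /andP[gG gyz].
    have Pw : ~~ coll P (g y) by rewrite gcollP.
    case/collP: gyz => K /andP[wK zK].
    exists (K, g y) => //; rewrite inE /= zK wK notP_Nz // andbT /=.
    by rewrite andbT; apply: contraNneq (notP_NL Pw) => <-.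
  move: pS; rewrite inE /= => /and4P[zK KL wK wz].
  have PnK : ~~ inc P K.
    apply: contra KL => PK; apply/eqP; exact: (uniq_line PNz PK zK PL zL).
  have Pw : ~~ coll P w'.
    by apply: contra wz => Pw; apply/eqP; apply: (no_two PnK wK zK Pw zP).
  case: (reg_ex Pw) => g gG gy; exists g => //.
  by rewrite B_char gG gy (coll_line wK zK).
rewrite card_in_imset; last first.
  move=> [K w] [K' w']; rewrite !inE /= => /and4P[zK _ wK wz] /and4P[zK' _ wK' _] /= e.
  by rewrite e in wK wz *; rewrite (uniq_line wz wK zK wK' zK').
rewrite -sum1_card.
rewrite (eq_bigl (fun p : Ln * Pt => (inc z p.1 && (p.1 != L)) && (inc p.2 p.1 && (p.2 != z)))); last first.
  by move=> p; rewrite inE !andbA.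
rewrite -(@pair_big_dep _ _ _ Ln Pt (fun K => inc z K && (K != L)) (fun K w => inc w K && (w != z)) (fun _ _ => 1%N)) /=.
rewrite (eq_bigr (fun _ => s)); last first.
  move=> K /andP[zK _]; rewrite -(card_lineD zK) -sum1_card.
  by apply: eq_bigl => w; rewrite !inE andbC.
rewrite (eq_bigl (mem ([set K | inc z K] :\ L))); last first.
  by move=> K; rewrite !inE andbC.
by rewrite sum_nat_const card_ptD ?zL // mulnC.
Qed.

End Line.

Lemma hy_neq h : h \in G -> h != 1%g -> h y != y.
Proof.
move=> hG h1; apply: contra h1 => /eqP e; apply/eqP.
by apply: (reg_uniq hG (group1 G) Hy); rewrite perm1 e.
Qed.

Lemma AG_G N g : g \in lineStab inc G N -> g \in G.
Proof. by rewrite inE => /andP[]. Qed.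

Section Part.
Variable M : Ln.
Hypothesis yM : inc y M.
Local Notation z := (zpt inc P y M).
Local Notation L := (odflt M [pick L | inc P L && inc z L]).
Definition AG := Group (A_group yM).

Definition Pr1 (p : Ln * {perm Pt}) :=
  (inc y p.1 && (p.1 != M)) && (p.2 \in lineStab inc G p.1 :\ 1%g).
Definition Pr (x : (Ln * {perm Pt}) * {perm Pt}) :=
  Pr1 x.1 && (x.2 \in lineStab inc G M).
Definition fpr (x : (Ln * {perm Pt}) * {perm Pt}) : {perm Pt} := (x.2 * x.1.2)%g.

Lemma AV g : g \in lineStab inc G M -> g^-1%g \in lineStab inc G M.
Proof. by move=> gA; have : g^-1%g \in AG by rewrite groupV. Qed.

Lemma AM a b : a \in lineStab inc G M -> b \in lineStab inc G M -> (a * b)%g \in lineStab inc G M.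
Proof. by move=> aA bA; have : (a * b)%g \in AG by rewrite groupM. Qed.


Lemma notB_notA g : g \notin pointStab G z -> g \notin lineStab inc G M.
Proof. by apply: contra; apply: AsubB. Qed.

Lemma notB_vNM g : g \in G -> g \notin pointStab G z -> ~~ inc (g^-1%g y) M.
Proof.
move=> gG gB; apply: contra (notB_notA gB) => vM.
have : (g^-1)%g \in lineStab inc G M by rewrite A_char // groupV gG vM.
by move/AV; rewrite invgK.
Qed.

Lemma fpr_out x : Pr x -> fpr x \in G :\: pointStab G z.
Proof.
case: x => [[N h] b]; rewrite /Pr /Pr1 /fpr /= in_setD1 => /andP[/andP[/andP[yN NM] /andP[h1 hA]] bA].
have hG := AG_G hA; have bG := AG_G bA.
rewrite in_setD groupM // andbT; apply/negP; rewrite B_def => /andP[_ /eqP].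
rewrite permM.
move: (AsubB yM bA); rewrite B_def => /andP[_ /eqP ->] hz.
have hyN : inc (h y) N by move: hA; rewrite A_char // => /andP[].
have zN : ~~ inc z N.
  apply: contra NM => zN; apply/eqP.
  by apply: (uniq_line (notP_Nz yM Hy)) => //; apply: zM.
have := no_two zN yN hyN (coll_line (zM yM) yM).
rewrite -{1}hz gcoll // (coll_line (zM yM) yM) => /(_ isT) e.
by move: (hy_neq hG h1); rewrite -e eqxx.
Qed.

Lemma fpr_inj : {in [pred x | Pr x] &, injective fpr}.
Proof.
move=> [[N h] b] [[N' h'] b'] H1 H2 e.
have := fpr_out H1; rewrite in_setD => /andP[gB gG].
move: H1 H2 e.
rewrite !inE /Pr /Pr1 /fpr /= !in_setD1.
move=> /andP[/andP[/andP[yN NM] /andP[h1 hA]] bA].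
move=> /andP[/andP[/andP[yN' NM'] /andP[h1' hA']] bA'] e.
have hG := AG_G hA; have bG := AG_G bA.
have hG' := AG_G hA'; have bG' := AG_G bA'.
have vNM := notB_vNM gG gB; rewrite /fpr /= in vNM.
have hyN : inc (h y) N by move: hA; rewrite A_char // => /andP[].
have hyN' : inc (h' y) N' by move: hA'; rewrite A_char // => /andP[].
have mM : inc (b^-1%g y) M by rewrite A_fix // AV.
have mM' : inc (b'^-1%g y) M by rewrite A_fix // AV.
have gm : (b * h)%g (b^-1%g y) = h y by rewrite permM permKV.
have gm' : (b * h)%g (b'^-1%g y) = h' y by rewrite e permM permKV.
have c1 : coll (((b * h)^-1)%g y) (b^-1%g y).
  by rewrite -(@gcoll (b * h)%g _ _ gG) permKV gm (coll_line yN hyN).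
have c2 : coll (((b * h)^-1)%g y) (b'^-1%g y).
  by rewrite -(@gcoll (b * h)%g _ _ gG) permKV gm' (coll_line yN' hyN').
have em := no_two vNM mM mM' c1 c2.
have ehy : h y = h' y by rewrite -gm -gm' em.
have eh : h = h' := reg_uniq hG hG' Hy ehy.
rewrite -eh in e hyN' *.
have eb : b = b' := mulIg h _ _ e.
have eN : N = N'.
  apply: (uniq_line (hy_neq hG h1) hyN yN hyN' yN').
by rewrite eN eb.
Qed.


Lemma fpr_surj g : g \in G :\: pointStab G z -> exists2 x, Pr x & g = fpr x.
Proof.
rewrite in_setD => /andP[gB gG].
have vNM := notB_vNM gG gB.
case: (gq_ax vNM) => m [/andP[mM vm] _].
have gv : g (g^-1%g y) = y by rewrite permKV.
have mz : m != z.
  apply/eqP => em; rewrite em in vm.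
  have c : coll y (g z) by move: vm; rewrite -(@gcoll g _ _ gG) gv.
  have gzL : inc (g z) L by rewrite Gfix_line ?zL ?PL.
  have := no_two (notP_NL yM Hy) gzL (zL yM) c (coll_line yM (zM yM)).
  by move=> ez; move: gB; rewrite B_def gG ez eqxx.
have Pm : ~~ coll P m by apply: contra mz => Pm; apply/eqP; apply: z_uniq.
case: (reg_ex Pm) => b' b'G b'y.
have b'A : b' \in lineStab inc G M by rewrite A_char // b'G b'y.
pose h := (b' * g)%g.
have hG : h \in G by rewrite groupM.
have hy : h y = g m by rewrite permM b'y.
have c : coll y (h y) by rewrite hy -gv gcoll.
case/collP: c => N /andP[yN hyN].
have eg : g = (b'^-1 * h)%g by rewrite mulKg.
have h1 : h != 1%g.
  apply: contra (notB_notA gB) => /eqP h1.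
  by rewrite eg h1 mulg1 AV.
have NM : N != M.
  apply: contra (notB_notA gB) => /eqP eN.
  have hA : h \in lineStab inc G M by rewrite A_char // hG -eN.
  by rewrite eg AM // AV.
exists ((N, h), b'^-1%g) => //.
by rewrite /Pr /Pr1 /= yN NM in_setD1 h1 A_char // hG hyN AV.
Qed.

Lemma G_split : G :\: pointStab G z = [set fpr x | x in [pred x | Pr x]].
Proof.
apply/setP => g; apply/idP/imsetP => [/fpr_surj [x Px ->]|[x Px ->]].
  by exists x.
exact: fpr_out.
Qed.

Lemma B_sub : pointStab G z \subset G.
Proof. by apply/subsetP => g; rewrite B_def => /andP[]. Qed.

Lemma sum_split (F : {perm Pt} -> algC) :
  (\sum_(g in G) F g = \sum_(g in pointStab G z) F g + \sum_(x | Pr x) F (fpr x))%R.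
Proof.
rewrite (big_setID (pointStab G z)) /= (setIidPr B_sub) G_split.
by rewrite big_imset //=; apply: fpr_inj.
Qed.

End Part.

Section Char.
Local Open Scope ring_scope.
Variable chi : 'CF(G).
Hypothesis Hlin : chi \is a linear_char.
Hypothesis Hnt : chi != 1.

Lemma chi_sum_group (H : {group {perm Pt}}) : H \subset G ->
  \sum_(g in H) chi g = if H \subset cfker chi then #|H|%:R else 0.
Proof.
move=> sHG; case: ifP => [sK | /negbT nsK].
  rewrite -sumr_const; apply: eq_bigr => g gH.
  by rewrite cfker1 ?lin_char1 // (subsetP sK).
case/subsetPn: nsK => h hH hK.
have hG := subsetP sHG h hH.
have h1 : chi h != 1.
  apply: contra hK => /eqP e; rewrite cfkerEchar ?lin_charW // inE hG lin_char1 // e eqxx.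
  done.
set S := \sum_(g in H) chi g.
have eS : S = chi h * S.
  rewrite /S big_distrr /= (reindex (mulg h)) /=; last first.
    by exists (mulg h^-1) => x _; rewrite ?mulKg ?mulKVg.
  apply: eq_big => [x | x xH]; first by rewrite groupMl.
  by rewrite lin_charM // (subsetP sHG) // -(groupMl _ hH).
have : (1 - chi h) * S = 0 by rewrite mulrBl mul1r -eS subrr.
by move/eqP; rewrite mulf_eq0 subr_eq0 eq_sym (negbTE h1) => /eqP.
Qed.

Lemma chi_sum_G : \sum_(g in G) chi g = 0.
Proof.
rewrite chi_sum_group //; case: ifP => // sK.
case/eqP: Hnt; apply/cfun_inP => x xG.
by rewrite cfun1E xG cfker1 ?lin_char1 // (subsetP sK).
Qed.


Lemma sum_count (T : finType) (Pp Q : pred T) (c : algC) :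
  \sum_(i | Pp i) (if Q i then c else 0) = c *+ #|[set i | Pp i & Q i]|.
Proof. by rewrite -big_mkcondr -sumr_const; apply: eq_bigl => i; rewrite inE. Qed.

Lemma csA M (yM : inc y M) : \sum_(g in lineStab inc G M) chi g =
  if lineStab inc G M \subset cfker chi then s%:R else 0.
Proof.
have sub : AG yM \subset G by apply/subsetP => g; apply: AG_G.
by move: (chi_sum_group sub) => /=; rewrite (card_A yM).
Qed.

Lemma csB M (yM : inc y M) : \sum_(g in pointStab G (zpt inc P y M)) chi g =
  if pointStab G (zpt inc P y M) \subset cfker chi then (s * t)%:R else 0.
Proof.
pose BG := Group (B_group M).
have sub : BG \subset G by apply: B_sub.
by move: (chi_sum_group sub) => /=; rewrite (card_B yM).
Qed.

Lemma A1 N (yN : inc y N) : 1%g \in lineStab inc G N.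
Proof. by rewrite A_char // group1 perm1. Qed.

Lemma sumAD1 N (yN : inc y N) :
  \sum_(h in lineStab inc G N :\ 1%g) chi h = \sum_(g in lineStab inc G N) chi g - 1.
Proof.
apply/eqP; rewrite eq_sym subr_eq (big_setD1 1%g (A1 yN)) /= lin_char1 //.
by rewrite addrC.
Qed.

Lemma sumBD1 N :
  \sum_(h in pointStab G (zpt inc P y N) :\ 1%g) chi h =
  \sum_(g in pointStab G (zpt inc P y N)) chi g - 1.
Proof.
have B1 : 1%g \in pointStab G (zpt inc P y N) by rewrite B_def group1 perm1 eqxx.
apply/eqP; rewrite eq_sym subr_eq (big_setD1 1%g B1) /= lin_char1 //.
by rewrite addrC.
Qed.

Lemma EM M (yM : inc y M) :
  0 = \sum_(g in pointStab G (zpt inc P y M)) chi g +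
      (\sum_(g in lineStab inc G M) chi g) *
      (\sum_(N | inc y N && (N != M)) (\sum_(g in lineStab inc G N) chi g - 1)).
Proof.
transitivity (\sum_(g in G) chi g); first by rewrite chi_sum_G.
rewrite (sum_split yM); congr (_ + _).
rewrite (eq_bigr (fun x => chi x.2 * chi x.1.2)); last first.
  move=> [[N h] b]; rewrite /Pr /Pr1 /= in_setD1 => /andP[/andP[_ /andP[_ hA]] bA].
  by rewrite /fpr /= lin_charM //; apply: AG_G; eassumption.
rewrite -(@pair_big_dep _ _ _ (Ln * {perm Pt})%type {perm Pt} (Pr1 M)
           (fun _ b => b \in lineStab inc G M) (fun p b => chi b * chi p.2)) /=.
rewrite (eq_bigr (fun p => (\sum_(g in lineStab inc G M) chi g) * chi p.2)); last first.
  by move=> p _; rewrite -mulr_suml.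
rewrite -mulr_sumr; congr (_ * _).
rewrite -(@pair_big_dep _ _ _ Ln {perm Pt} (fun N => inc y N && (N != M))
           (fun N h => h \in lineStab inc G N :\ 1%g) (fun _ h => chi h)) /=.
by apply: eq_bigr => N /andP[yN _]; rewrite sumAD1.
Qed.


Lemma Delta_val : Delta inc y chi = s%:R * (u_count inc y chi)%:R - t%:R - 1.
Proof.
rewrite /Delta (eq_bigr (fun M => (if lineStab inc G M \subset cfker chi then s%:R else 0) - 1 : algC)); last first.
  by move=> M yM; rewrite sumAD1 // csA.
rewrite sumrB sum_count.
have -> : \sum_(M | inc y M) (1 : algC) = t.+1%:R.
  by rewrite -(pt_card y) -sumr_const; apply: eq_bigl => M; rewrite inE.
by rewrite /u_count mulr_natr -natr1 opprD addrA.
Qed.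

Lemma DeltaS_val : DeltaStar inc P y chi = (s * t)%:R * (u'_count inc P y chi)%:R - t%:R - 1.
Proof.
rewrite /DeltaStar (eq_bigr (fun M => (if pointStab G (zpt inc P y M) \subset cfker chi then (s * t)%:R else 0) - 1 : algC)); last first.
  by move=> M yM; rewrite sumBD1 // csB.
rewrite sumrB sum_count.
have -> : \sum_(M | inc y M) (1 : algC) = t.+1%:R.
  by rewrite -(pt_card y) -sumr_const; apply: eq_bigl => M; rewrite inE.
by rewrite /u'_count mulr_natr -natr1 opprD addrA.
Qed.

Lemma key M (yM : inc y M) : lineStab inc G M \subset cfker chi ->
  0 = (if pointStab G (zpt inc P y M) \subset cfker chi then (s * t)%:R else 0)
      + s%:R * (s%:R * (u_count inc y chi)%:R - t%:R - 1 - (s%:R - 1)) :> algC.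
Proof.
move=> aM; rewrite -csB // -Delta_val.
have eD : Delta inc y chi = (s%:R - 1) +
   \sum_(N | inc y N && (N != M)) (\sum_(g in lineStab inc G N) chi g - 1).
  rewrite /Delta (eq_bigr (fun N => \sum_(g in lineStab inc G N) chi g - 1)); last first.
    by move=> N yN; rewrite sumAD1.
  by rewrite (bigD1 M) //= csA // aM.
rewrite eD (addrC (s%:R - 1)) addrK.
by have := EM yM; rewrite csA // aM.
Qed.

Lemma classif : let u := u_count inc y chi in let u' := u'_count inc P y chi in
  [\/ (u = 1%N /\ u' = 1%N), (u = 0%N /\ u' = 0%N)
    | (u%:R = t%:R / s%:R + 1 :> algC) /\ u' = 0%N].
Proof.
move=> u u'.
have Hs : s%:R != 0 :> algC by rewrite pnatr_eq0 -lt0n s_pos.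
have AB M : lineStab inc G M \subset pointStab G (zpt inc P y M) -> True by [].
case: (posnP u') => [u'0 | u'pos].
  case: (posnP u) => [u0 | upos]; first by apply: Or32.
  apply: Or33; split => //.
  case/card_gt0P: upos => M; rewrite inE => /andP[yM aM].
  have nbM : ~~ (pointStab G (zpt inc P y M) \subset cfker chi).
    apply/negP => bM.
    have : (0 < u')%N by apply/card_gt0P; exists M; rewrite inE yM bM.
    by rewrite u'0.
  have := key yM aM; rewrite (negbTE nbM) add0r => /esym /eqP.
  rewrite mulf_eq0 (negbTE Hs) /= => /eqP H0.
  apply: (mulfI Hs); rewrite mulrDr mulr1 [s%:R * (t%:R / s%:R)]mulrC divfK //.
  apply/eqP; rewrite -subr_eq0; apply/eqP; rewrite -H0 /u; ring.
case/card_gt0P: (u'pos) => M; rewrite inE => /andP[yM bM].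
have sAB : lineStab inc G M \subset pointStab G (zpt inc P y M).
  by apply/subsetP => g; apply: AsubB => //.
have aM := subset_trans sAB bM.
have := key yM aM; rewrite bM => /esym H0.
have u1 : u = 1%N.
  have : s%:R * s%:R * ((u%:R : algC) - 1) = 0.
    by rewrite -H0 /u natrM; ring.
  move/eqP; rewrite !mulf_eq0 (negbTE Hs) /= subr_eq0 => /eqP.
  by move/(congr1 (fun x : algC => x == 1%:R)); rewrite eqr_nat eqxx => /eqP.
have le : (u' <= u)%N.
  apply: subset_leq_card; apply/subsetP => N; rewrite !inE => /andP[yN bN].
  rewrite yN /=; apply: (subset_trans _ bN); apply/subsetP => g; apply: AsubB => //.
apply: Or31; split => //; apply/eqP; rewrite eqn_leq u'pos -u1 le.
done.
Qed.

End Char.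
End Geo.

Local Open Scope ring_scope.

Theorem proposition2p4 (Pt Ln : finType) (inc : Pt -> Ln -> bool) (s t : nat)
    (p0 : Pt) (G : {group {perm Pt}}) (y : Pt) (chi : 'CF(G)) :
  is_EGQ inc s t p0 G ->
  ~~ collinear inc p0 y ->
  chi \is a linear_char ->
  chi != 1 ->
  let u := u_count inc y chi in
  let u' := u'_count inc p0 y chi in
  [/\ Delta inc y chi = s%:R * u%:R - t%:R - 1,
      DeltaStar inc p0 y chi = (s * t)%:R * u'%:R - t%:R - 1
    & [\/ (u = 1%N /\ u' = 1%N),
          (u = 0%N /\ u' = 0%N)
        | (u%:R = t%:R / s%:R + 1 :> algC) /\ u' = 0%N]].
Proof.
move=> HE Hy Hlin Hnt u u'; split.
- exact: (Delta_val HE Hy Hlin).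
- exact: (DeltaS_val HE Hy Hlin).
- exact: (classif HE Hy Hlin Hnt).
Qed.
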